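(* Let $\mathbf{q}^*\in\mathbb{S}^3$ be a fixed unit quaternion (the attractor) and consider the rotational dynamical system on unit quaternions $$\boldsymbol{\omega} = \mathbf{A}_o\, k_q(\mathbf{q},\mathbf{q}^* )\, \log(\mathbf{q}\otimes\bar{\mathbf{q}}^* ),$$ where $\boldsymbol{\omega}\in\mathbb{R}^3$ is the angular velocity driving $\mathbf{q}(t)$ through the quaternion propagation equation $\dot{\mathbf{q}} = \tfrac12 \tilde{\boldsymbol{\omega}}\otimes\mathbf{q}$ with $\tilde{\boldsymbol{\omega}}=[0,\boldsymbol{\omega}^\top]^\top$, and $\mathbf{A}_o\in\mathbb{R}^{3\times3}$. If $$\mathbf{A}_o=\mathbf{A}_o^\top\prec 0 \quad\text{and}\quad k_q(\mathbf{q},\mathbf{q}^* )=\frac{\|\mathrm{vec}(\mathbf{q}\otimes\bar{\mathbf{q}}^* )\|}{\arccos(\mathrm{scalar}(\mathbf{q}\otimes\bar{\mathbf{q}}^* ))},$$ then this dynamical system is globally asymptotically stable at the attractor $\mathbf{q}^*$, i.e. $\lim_{t\to\infty}\|\log(\mathbf{q}^*\otimes\bar{\mathbf{q}}(t))\|=0$.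
   Context: A unit quaternion is $\mathbf{q}=[s,\boldsymbol{u}^\top]^\top\in\mathbb{S}^3\subset\mathbb{R}^4$ with scalar part $\mathrm{scalar}(\mathbf{q})=s\in\mathbb{R}$ and vector part $\mathrm{vec}(\mathbf{q})=\boldsymbol{u}\in\mathbb{R}^3$. The conjugate is $\bar{\mathbf{q}}=[s,-\boldsymbol{u}^\top]^\top$. The quaternion product is $\mathbf{q}_1\otimes\mathbf{q}_2=[s_1s_2-\boldsymbol{u}_1^\top\boldsymbol{u}_2,\ (s_1\boldsymbol{u}_2+s_2\boldsymbol{u}_1+\mathbf{S}(\boldsymbol{u}_1)\boldsymbol{u}_2)^\top]^\top$, where $\mathbf{S}(\cdot)$ denotes the $3\times3$ skew-symmetric (cross-product) matrix. The quaternion logarithm $\log:\mathbb{S}^3\to\mathbb{R}^3$ is $\log([s,\boldsymbol{u}^\top]^\top)=\arccos(s)\,\boldsymbol{u}/\|\boldsymbol{u}\|$ if $\|\boldsymbol{u}\|>0$ and $[0,0,0]^\top$ otherwise. The propagation equation $\dot{\mathbf{q}}=\tfrac12\tilde{\boldsymbol{\omega}}\otimes\mathbf{q}$ reads $\dot s=-\tfrac12\boldsymbol{u}^\top\boldsymbol{\omega}$, $\dot{\boldsymbol{u}}=\tfrac12(s\mathbf{I}-\mathbf{S}(\boldsymbol{u}))\boldsymbol{\omega}$. *)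

(* Defs.v *)
From Stdlib Require Import Reals.
From Coquelicot Require Import Coquelicot.
Open Scope R_scope.

Record vec3 := mkV { vx : R; vy : R; vz : R }.

Definition vzero : vec3 := mkV 0 0 0.
Definition vadd (a b : vec3) : vec3 := mkV (vx a + vx b) (vy a + vy b) (vz a + vz b).
Definition vopp (a : vec3) : vec3 := mkV (- vx a) (- vy a) (- vz a).
Definition vscale (c : R) (a : vec3) : vec3 := mkV (c * vx a) (c * vy a) (c * vz a).
Definition vdot (a b : vec3) : R := vx a * vx b + vy a * vy b + vz a * vz b.
Definition vnorm (a : vec3) : R := sqrt (vdot a a).
Definition vcross (a b : vec3) : vec3 :=
  mkV (vy a * vz b - vz a * vy b) (vz a * vx b - vx a * vz b) (vx a * vy b - vy a * vx b).

(* 3x3 real matrices, entries indexed by 0,1,2 *)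
Definition mat3 := nat -> nat -> R.
Definition row (A : mat3) (i : nat) (v : vec3) : R :=
  A i 0%nat * vx v + A i 1%nat * vy v + A i 2%nat * vz v.
Definition mvmul (A : mat3) (v : vec3) : vec3 := mkV (row A 0 v) (row A 1 v) (row A 2 v).
Definition symmetric3 (A : mat3) : Prop :=
  forall i j : nat, (i < 3)%nat -> (j < 3)%nat -> A i j = A j i.
Definition negdef3 (A : mat3) : Prop :=
  forall v : vec3, v <> vzero -> vdot v (mvmul A v) < 0.

Record quat := mkQ { qs : R; qv : vec3 }.
Definition qnorm (q : quat) : R := sqrt (qs q ^ 2 + vdot (qv q) (qv q)).
Definition unit_quat (q : quat) : Prop := qnorm q = 1.
Definition qconj (q : quat) : quat := mkQ (qs q) (vopp (qv q)).
Definition qmul (p q : quat) : quat :=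
  mkQ (qs p * qs q - vdot (qv p) (qv q))
      (vadd (vadd (vscale (qs p) (qv q)) (vscale (qs q) (qv p))) (vcross (qv p) (qv q))).
Definition qlog (q : quat) : vec3 :=
  if Rlt_dec 0 (vnorm (qv q)) then vscale (acos (qs q) / vnorm (qv q)) (qv q) else vzero.
Definition qpure (w : vec3) : quat := mkQ 0 w.

Definition kq (q qstar : quat) : R :=
  vnorm (qv (qmul q (qconj qstar))) / acos (qs (qmul q (qconj qstar))).

Definition omega_field (A : mat3) (qstar q : quat) : vec3 :=
  mvmul A (vscale (kq q qstar) (qlog (qmul q (qconj qstar)))).

Definition quat_is_derive (q : R -> quat) (t : R) (dq : quat) : Prop :=
  is_derive (fun s => qs (q s)) t (qs dq) /\
  is_derive (fun s => vx (qv (q s))) t (vx (qv dq)) /\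
  is_derive (fun s => vy (qv (q s))) t (vy (qv dq)) /\
  is_derive (fun s => vz (qv (q s))) t (vz (qv dq)).

(* Main.v *)
Require Import Defs.
From Stdlib Require Import Reals Lra Psatz.
From Coquelicot Require Import Coquelicot.
Open Scope R_scope.
From Stdlib Require Import Lia.
Definition Qf (a b c d e f x y z : R) :=
  a*x*x + b*y*y + c*z*z + 2*d*x*y + 2*e*x*z + 2*f*y*z.

Lemma abs_term2 c u v : 2*c*u*v <= Rabs c * (u*u + v*v).
Proof.
  destruct (Rle_dec 0 c).
  - rewrite Rabs_right by lra.
    assert (0 <= c * ((u-v)*(u-v))) by (apply Rmult_le_pos; [lra|apply Rle_0_sqr]). nra.
  - rewrite Rabs_left by lra.
    assert (0 <= -c * ((u+v)*(u+v))) by (apply Rmult_le_pos; [lra|apply Rle_0_sqr]). nra.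
Qed.
Lemma abs_term1 c u : c*u*u <= Rabs c * (u*u).
Proof.
  destruct (Rle_dec 0 c).
  - rewrite Rabs_right by lra. nra.
  - rewrite Rabs_left by lra. assert (0 <= -c * (u*u)) by (apply Rmult_le_pos; [lra|apply Rle_0_sqr]). nra.
Qed.

Lemma Qf_ub a b c d e f x y z :
  Qf a b c d e f x y z <=
  (Rabs a + Rabs b + Rabs c + Rabs d + Rabs e + Rabs f) * (x*x+y*y+z*z).
Proof.
  unfold Qf.
  pose proof (abs_term1 a x). pose proof (abs_term1 b y). pose proof (abs_term1 c z).
  pose proof (abs_term2 d x y). pose proof (abs_term2 e x z). pose proof (abs_term2 f y z).
  pose proof (Rabs_pos a). pose proof (Rabs_pos b). pose proof (Rabs_pos c).
  pose proof (Rabs_pos d). pose proof (Rabs_pos e). pose proof (Rabs_pos f).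
  assert (0 <= x*x) by nra. assert (0 <= y*y) by nra. assert (0 <= z*z) by nra.
  nra.
Qed.

Lemma quad_lb a b c d e f :
  (forall x y z, x <> 0 \/ y <> 0 \/ z <> 0 -> 0 < Qf a b c d e f x y z) ->
  exists k, 0 < k /\ forall x y z, k * (x*x+y*y+z*z) <= Qf a b c d e f x y z.
Proof.
  intros H.
  assert (H0 : forall x y z, 0 <= Qf a b c d e f x y z).
  { intros x y z. destruct (Req_dec x 0) as [->|]; [|apply Rlt_le, H; auto].
    destruct (Req_dec y 0) as [->|]; [|apply Rlt_le, H; auto].
    destruct (Req_dec z 0) as [->|]; [|apply Rlt_le, H; auto].
    unfold Qf; lra. }
  assert (ha : 0 < a).
  { pose proof (H 1 0 0 (or_introl R1_neq_R0)). unfold Qf in H1. lra. }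
  assert (hm2 : 0 < a*b - d*d).
  { assert (Hn : -a <> 0) by lra.
    pose proof (H d (-a) 0 (or_intror (or_introl Hn))) as H1.
    replace (Qf a b c d e f d (-a) 0) with (a * (a*b - d*d)) in H1 by (unfold Qf; ring).
    nra. }
  set (C11 := b*c - f*f). set (C12 := e*f - c*d). set (C13 := d*f - b*e).
  set (C22 := a*c - e*e). set (C23 := d*e - a*f). set (C33 := a*b - d*d).
  set (det := a*C11 + d*C12 + e*C13).
  assert (hdet : 0 < det).
  { assert (Hn : C33 <> 0) by (unfold C33; lra).
    pose proof (H C13 C23 C33 (or_intror (or_intror Hn))) as H1.
    replace (Qf a b c d e f C13 C23 C33) with (C33 * det) in H1
      by (unfold Qf, det, C11, C12, C13, C23, C33; ring).
    unfold C33 in H1. nra. }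
  set (K := Rabs C11 + Rabs C22 + Rabs C33 + Rabs C12 + Rabs C13 + Rabs C23).
  assert (hK : 0 <= K) by (unfold K; pose proof (Rabs_pos C11); pose proof (Rabs_pos C22);
    pose proof (Rabs_pos C33); pose proof (Rabs_pos C12); pose proof (Rabs_pos C13);
    pose proof (Rabs_pos C23); lra).
  exists (det / (K + 1)). split. apply Rdiv_lt_0_compat; lra.
  intros x y z.
  set (n2 := x*x+y*y+z*z).
  set (q := Qf a b c d e f x y z).
  assert (Hq0 : 0 <= q) by apply H0.
  destruct (Req_dec n2 0) as [Hn|Hn].
  { rewrite Hn. lra. }
  assert (Hnp : 0 < n2) by (unfold n2 in *; nra).
  assert (Hqp : 0 < q).
  { apply H. destruct (Req_dec x 0); [|auto]. destruct (Req_dec y 0); [|auto].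
    destruct (Req_dec z 0); [|auto]. exfalso; apply Hn; unfold n2; subst; ring. }
  set (P := Qf C11 C22 C33 C12 C13 C23 x y z).
  assert (HP : P <= K * n2) by (unfold P, K, n2; apply Qf_ub).
  set (w1 := C11*x + C12*y + C13*z).
  set (w2 := C12*x + C22*y + C23*z).
  set (w3 := C13*x + C23*y + C33*z).
  assert (Hid : forall al be,
    Qf a b c d e f (al*x - be*w1) (al*y - be*w2) (al*z - be*w3) =
    al*al*q - 2*al*be*det*n2 + be*be*det*P).
  { intros al be. unfold Qf at 1, q, P, Qf, n2, det, w1, w2, w3, C11, C12, C13, C22, C23, C33.
    ring. }
  pose proof (H0 (det*n2*x - q*w1) (det*n2*y - q*w2) (det*n2*z - q*w3)) as H1.
  rewrite Hid in H1.
  assert (H2 : det*det*n2*n2 * q <= q * q * det * P) by nra.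
  assert (H3 : det*n2*n2 <= q * P).
  { apply (Rmult_le_reg_l (q*det)). nra. nra. }
  assert (H4 : det * n2 <= q * K).
  { apply (Rmult_le_reg_l n2). lra. nra. }
  apply (Rmult_le_reg_l (K+1)). lra.
  field_simplify; [|lra]. nra.
Qed.
Lemma is_derive_eq (f : R -> R) x l l' : is_derive f x l -> l = l' -> is_derive f x l'.
Proof. intros H ->; exact H. Qed.

Lemma is_derive_lin4 (S X Y Z : R->R) t dS dX dY dZ a b c d :
  is_derive S t dS -> is_derive X t dX -> is_derive Y t dY -> is_derive Z t dZ ->
  is_derive (fun r => S r * a + X r * b + Y r * c + Z r * d) t (dS*a + dX*b + dY*c + dZ*d).
Proof.
  intros HS HX HY HZ.
  apply (is_derive_plus (fun r => S r * a + X r * b + Y r * c) (fun r => Z r * d)).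
  apply (is_derive_plus (fun r => S r * a + X r * b) (fun r => Y r * c)).
  apply (is_derive_plus (fun r => S r * a) (fun r => X r * b)).
  apply (is_derive_scal_l S t dS a HS).
  apply (is_derive_scal_l X t dX b HX).
  apply (is_derive_scal_l Y t dY c HY).
  apply (is_derive_scal_l Z t dZ d HZ).
Qed.

Lemma gronwall (f df : R -> R) (c : R) :
  (forall t, 0 <= t -> is_derive f t (df t)) ->
  (forall t, 0 <= t -> df t <= c * f t) ->
  forall t, 0 <= t -> f t <= f 0 * exp (c * t).
Proof.
  intros Hd Hb t Ht.
  set (g := fun r => f r * exp (- c * r)).
  set (dg := fun r => df r * exp (- c * r) + f r * (- c * exp (- c * r))).
  assert (Hg : forall r, 0 <= r -> is_derive g r (dg r)).
  { intros r Hr. unfold g, dg.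
    apply (is_derive_mult f (fun r => exp (- c * r))). now apply Hd.
    auto_derive; auto. ring. intros; apply Rmult_comm. }
  assert (Hgt : g t <= g 0).
  { destruct (Req_dec t 0) as [->|Hn]. lra.
    destruct (MVT_cor3 g dg 0 t) as [x [Hx1 [Hx2 Hx3]]]. lra.
    intros x Hx1 Hx2. apply is_derive_Reals. apply Hg. lra.
    rewrite Hx3. assert (dg x <= 0).
    { unfold dg. specialize (Hb x Hx1). pose proof (exp_pos (- c * x)). nra. }
    nra. }
  unfold g in Hgt. replace (- c * 0) with 0 in Hgt by ring. rewrite exp_0 in Hgt.
  assert (He : exp (- c * t) * exp (c * t) = 1).
  { rewrite <- exp_plus. replace (- c * t + c * t) with 0 by ring. apply exp_0. }
  pose proof (exp_pos (c * t)).
  replace (f t) with (f t * exp (- c * t) * exp (c * t)).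
  apply Rmult_le_compat_r; lra.
  rewrite Rmult_assoc, He; ring.
Qed.

Lemma sqrt_eq1 x : 0 <= x -> sqrt x = 1 -> x = 1.
Proof. intros H0 H. rewrite <- (sqrt_sqrt x H0), H. ring. Qed.

Lemma vdot_nonneg v : 0 <= vdot v v.
Proof. destruct v as [a b c]; unfold vdot; simpl.
  pose proof (Rle_0_sqr a); pose proof (Rle_0_sqr b); pose proof (Rle_0_sqr c); unfold Rsqr in *; lra. Qed.

Lemma unit_eq q : unit_quat q -> qs q ^ 2 + vdot (qv q) (qv q) = 1.
Proof. intros H. apply sqrt_eq1; [|exact H]. pose proof (vdot_nonneg (qv q)).
  pose proof (pow2_ge_0 (qs q)). lra. Qed.

Lemma norm_mul q1 q2 :
  qs (qmul q1 (qconj q2)) ^ 2 + vdot (qv (qmul q1 (qconj q2))) (qv (qmul q1 (qconj q2))) =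
  (qs q1 ^ 2 + vdot (qv q1) (qv q1)) * (qs q2 ^ 2 + vdot (qv q2) (qv q2)).
Proof. destruct q1 as [s1 [a1 b1 c1]], q2 as [s2 [a2 b2 c2]].
  unfold qmul, qconj, vdot, vadd, vscale, vcross, vopp; simpl; ring. Qed.

Lemma vnorm_pos_dot v : 0 < vnorm v -> 0 < vdot v v.
Proof. intros H. unfold vnorm in H. pose proof (vdot_nonneg v).
  destruct (Req_dec (vdot v v) 0) as [E|E]; [rewrite E, sqrt_0 in H; lra| lra]. Qed.

Lemma vnorm_zero_dot v : ~ 0 < vnorm v -> vdot v v = 0.
Proof. intros H. unfold vnorm in H. pose proof (vdot_nonneg v).
  pose proof (sqrt_pos (vdot v v)).
  assert (sqrt (vdot v v) = 0) by lra. apply sqrt_eq_0; auto. Qed.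

Lemma omega_eq A qstar qq :
  qs (qmul qq (qconj qstar)) ^ 2 + vdot (qv (qmul qq (qconj qstar))) (qv (qmul qq (qconj qstar))) = 1 ->
  omega_field A qstar qq = mvmul A (qv (qmul qq (qconj qstar))).
Proof.
  intros Hn. unfold omega_field, kq, qlog.
  set (p := qmul qq (qconj qstar)) in *.
  destruct (Rlt_dec 0 (vnorm (qv p))) as [Hp|Hp].
  - pose proof (vnorm_pos_dot _ Hp).
    assert (Hs : -1 < qs p < 1) by nra.
    pose proof (acos_bound_lt _ Hs).
    f_equal.
    assert (Hc : vnorm (qv p) / acos (qs p) * (acos (qs p) / vnorm (qv p)) = 1) by (field; lra).
    revert Hc. generalize (vnorm (qv p) / acos (qs p)) (acos (qs p) / vnorm (qv p)).
    intros c1 c2 Hc. destruct (qv p) as [a b c]. unfold vscale; simpl.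
    f_equal; rewrite <- Rmult_assoc, Hc; ring.
  - pose proof (vnorm_zero_dot _ Hp).
    f_equal. destruct (qv p) as [a b c]. unfold vdot in H; simpl in H.
    assert (a = 0) by nra. assert (b = 0) by nra. assert (c = 0) by nra. subst.
    unfold vscale, vzero; simpl. f_equal; ring.
Qed.

Lemma sdot_formula (qq qst : quat) (w : vec3) :
  let dq := qmul (mkQ (1/2) vzero) (qmul (qpure w) qq) in
  qs dq * qs qst + vx (qv dq) * vx (qv qst) + vy (qv dq) * vy (qv qst) + vz (qv dq) * vz (qv qst)
  = -(1/2) * vdot (qv (qmul qq (qconj qst))) w.
Proof. destruct qq as [s1 [a1 b1 c1]], qst as [s2 [a2 b2 c2]], w as [x y z].
  unfold qmul, qconj, qpure, vzero, vdot, vadd, vscale, vcross, vopp; simpl; field. Qed.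

Lemma s_ext qq qst : qs (qmul qq (qconj qst)) =
  qs qq * qs qst + vx (qv qq) * vx (qv qst) + vy (qv qq) * vy (qv qst) + vz (qv qq) * vz (qv qst).
Proof. destruct qq as [s1 [a1 b1 c1]], qst as [s2 [a2 b2 c2]].
  unfold qmul, qconj, vdot, vopp; simpl; ring. Qed.

Lemma vdotA A v : symmetric3 A ->
  vdot v (mvmul A v) = Qf (A 0 0)%nat (A 1 1)%nat (A 2 2)%nat (A 0 1)%nat (A 0 2)%nat (A 1 2)%nat (vx v) (vy v) (vz v).
Proof. intros H. destruct v as [x y z]; unfold vdot, mvmul, row, Qf; simpl.
  rewrite (H 1%nat 0%nat), (H 2%nat 0%nat), (H 2%nat 1%nat) by lia. ring. Qed.

Lemma vnorm_scale c w : vnorm (vscale c w) = Rabs c * vnorm w.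
Proof. unfold vnorm. replace (vdot (vscale c w) (vscale c w)) with (Rsqr c * vdot w w)
  by (destruct w; unfold vdot, vscale, Rsqr; simpl; ring).
  rewrite sqrt_mult_alt by apply Rle_0_sqr. rewrite sqrt_Rsqr_abs. reflexivity. Qed.

Lemma N_cases qstar qq :
  (0 < vnorm (qv (qmul qq (qconj qstar))) /\
     vnorm (qlog (qmul qstar (qconj qq))) = acos (qs (qmul qq (qconj qstar))))
  \/ vnorm (qlog (qmul qstar (qconj qq))) = 0.
Proof.
  assert (E1 : qs (qmul qstar (qconj qq)) = qs (qmul qq (qconj qstar))).
  { destruct qq as [s1 [a1 b1 c1]], qstar as [s2 [a2 b2 c2]].
    unfold qmul, qconj, vdot, vopp; simpl; ring. }
  assert (E2 : vnorm (qv (qmul qstar (qconj qq))) = vnorm (qv (qmul qq (qconj qstar)))).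
  { unfold vnorm; f_equal. destruct qq as [s1 [a1 b1 c1]], qstar as [s2 [a2 b2 c2]].
    unfold qmul, qconj, vdot, vadd, vscale, vcross, vopp; simpl; ring. }
  unfold qlog. rewrite E2, E1.
  destruct (Rlt_dec 0 (vnorm (qv (qmul qq (qconj qstar))))) as [Hp|Hp].
  - left. split; auto. rewrite vnorm_scale, E2.
    pose proof (acos_bound (qs (qmul qq (qconj qstar)))).
    rewrite Rabs_right. field. lra.
    apply Rle_ge, Rdiv_le_0_compat; lra.
  - right. unfold vnorm, vzero, vdot; simpl. replace (0*0+0*0+0*0) with 0 by ring. apply sqrt_0.
Qed.

Theorem theorem5 (A : mat3) (qstar : quat) (q : R -> quat) :
  unit_quat qstar ->
  symmetric3 A ->
  negdef3 A ->
  (forall t, 0 <= t -> unit_quat (q t)) ->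
  (forall t, 0 <= t ->
     quat_is_derive q t
       (qmul (mkQ (1/2) vzero) (qmul (qpure (omega_field A qstar (q t))) (q t)))) ->
  is_lim (fun t => vnorm (qlog (qmul qstar (qconj (q t))))) p_infty 0.
Proof.
  intros Hqs Hsym Hneg Hunit Hder.
  set (a0 := - A 0%nat 0%nat). set (a1 := - A 1%nat 1%nat). set (a2 := - A 2%nat 2%nat).
  set (a3 := - A 0%nat 1%nat). set (a4 := - A 0%nat 2%nat). set (a5 := - A 1%nat 2%nat).
  assert (HQ : forall v, vdot v (mvmul A v) = - Qf a0 a1 a2 a3 a4 a5 (vx v) (vy v) (vz v)).
  { intros v. rewrite vdotA by exact Hsym. unfold Qf, a0, a1, a2, a3, a4, a5. ring. }
  destruct (quad_lb a0 a1 a2 a3 a4 a5) as [k [Hk Hkb]].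
  { intros x y z Hxyz. pose proof (HQ (mkV x y z)) as E. simpl in E.
    assert (mkV x y z <> vzero).
    { intros Eq. injection Eq. intros. destruct Hxyz as [?|[?|?]]; auto. }
    pose proof (Hneg _ H). lra. }
  set (KA := Rabs a0 + Rabs a1 + Rabs a2 + Rabs a3 + Rabs a4 + Rabs a5).
  set (s := fun t => qs (qmul (q t) (qconj qstar))).
  set (u := fun t => qv (qmul (q t) (qconj qstar))).
  set (ds := fun t => -(1/2) * vdot (u t) (mvmul A (u t))).
  assert (Hn : forall t, 0 <= t -> s t ^ 2 + vdot (u t) (u t) = 1).
  { intros t Ht. unfold s, u. rewrite norm_mul, (unit_eq _ (Hunit t Ht)), (unit_eq _ Hqs). ring. }
  assert (Hrange : forall t, 0 <= t -> -1 <= s t <= 1).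
  { intros t Ht. pose proof (Hn t Ht). pose proof (vdot_nonneg (u t)). nra. }
  assert (Hds : forall t, 0 <= t -> is_derive s t (ds t)).
  { intros t Ht. destruct (Hder t Ht) as [H1 [H2 [H3 H4]]].
    eapply is_derive_ext.
    { intros r. symmetry. apply (s_ext (q r) qstar). }
    eapply is_derive_eq. apply is_derive_lin4; eassumption.
    unfold ds, u. rewrite <- sdot_formula. f_equal; [f_equal; [f_equal|]|]; f_equal; f_equal;
    rewrite omega_eq; auto; apply (Hn t Ht). }
  assert (Hdot : forall t, vdot (u t) (u t) = vx (u t) * vx (u t) + vy (u t) * vy (u t) + vz (u t) * vz (u t)).
  { intros t. reflexivity. }
  assert (Hlow : forall t, 0 <= t -> (1/2) * k * (1 - s t ^ 2) <= ds t).
  { intros t Ht. unfold ds. rewrite HQ. pose proof (Hkb (vx (u t)) (vy (u t)) (vz (u t))).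
    pose proof (Hn t Ht). rewrite Hdot in H0. nra. }
  assert (HKA : 0 <= KA).
  { unfold KA. pose proof (Rabs_pos a0). pose proof (Rabs_pos a1). pose proof (Rabs_pos a2).
    pose proof (Rabs_pos a3). pose proof (Rabs_pos a4). pose proof (Rabs_pos a5). lra. }
  assert (Hup : forall t, 0 <= t -> ds t <= (1/2) * KA * (1 - s t ^ 2)).
  { intros t Ht. unfold ds. rewrite HQ. pose proof (Qf_ub a0 a1 a2 a3 a4 a5 (vx (u t)) (vy (u t)) (vz (u t))).
    pose proof (Hn t Ht). rewrite Hdot in H0. fold KA in H. nra. }
  apply is_lim_spec. intros eps. simpl.
  destruct (Rle_lt_dec (s 0) (-1)) as [Hm1|Hgt].
  -
    assert (Hs0 : s 0 = -1) by (pose proof (Hrange 0 (Rle_refl 0)); lra).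
    assert (Hg := gronwall (fun t => 1 + s t) ds KA).
    assert (Hst : forall t, 0 <= t -> s t = -1).
    { intros t Ht. assert (1 + s t <= (1 + s 0) * exp (KA * t)).
      { apply Hg; auto.
        - intros r Hr. eapply is_derive_eq.
          apply (is_derive_plus (fun _ => 1) s). apply is_derive_const. apply Hds; auto.
          simpl. unfold plus, zero; simpl. ring.
        - intros r Hr. pose proof (Hup r Hr). pose proof (Hrange r Hr).
          assert (0 <= KA * (1 + s r) * (1 + s r)).
          { apply Rmult_le_pos; [apply Rmult_le_pos|]; lra. }
          nra. }
      rewrite Hs0 in H. pose proof (Hrange t Ht). nra. }
    exists 0. intros t Ht.
    destruct (N_cases qstar (q t)) as [[Hp E]|E].
    + exfalso. pose proof (vnorm_pos_dot _ Hp). pose proof (Hn t (Rlt_le _ _ Ht)).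
      rewrite (Hst t (Rlt_le _ _ Ht)) in H0. fold u in H. unfold u in H0. nra.
    + rewrite E. rewrite Rminus_0_r, Rabs_R0. apply cond_pos.
  -
    assert (Hmono : forall t, 0 <= t -> s 0 <= s t).
    { intros t Ht. assert (- s t <= - s 0 * exp (0 * t)).
      { apply (gronwall (fun t => - s t) (fun t => - ds t) 0); auto.
        - intros r Hr. apply (is_derive_opp s). apply Hds; auto.
        - intros r Hr. pose proof (Hlow r Hr). pose proof (Hrange r Hr).
          assert (0 <= k * (1 - s r ^ 2)) by (apply Rmult_le_pos; nra). nra. }
      rewrite Rmult_0_l, exp_0 in H. lra. }
    set (m := (1/2) * k * (1 + s 0)).
    assert (Hm : 0 < m) by (unfold m; apply Rmult_lt_0_compat; lra).
    assert (Hdec : forall t, 0 <= t -> 1 - s t <= (1 - s 0) * exp (- m * t)).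
    { intros t Ht. apply (gronwall (fun t => 1 - s t) (fun t => - ds t) (-m)); auto.
      - intros r Hr. eapply is_derive_eq.
        apply (is_derive_minus (fun _ => 1) s). apply is_derive_const. apply Hds; auto.
        unfold minus, plus, opp, zero; simpl. ring.
      - intros r Hr. pose proof (Hlow r Hr). pose proof (Hrange r Hr). pose proof (Hmono r Hr).
        unfold m.
        assert (0 <= k * (1 - s r) * (s r - s 0)).
        { apply Rmult_le_pos; [apply Rmult_le_pos|]; lra. }
        nra. }
    set (e' := Rmin eps (PI/2)).
    assert (He' : 0 < e' <= PI/2).
    { unfold e'. pose proof PI_RGT_0. pose proof (cond_pos eps).
      split. apply Rmin_glb_lt; lra. apply Rmin_r. }
    assert (He'e : e' <= eps) by apply Rmin_l.
    set (d := 1 - cos e').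
    assert (Hd : 0 < d).
    { unfold d. pose proof PI_RGT_0. pose proof (cos_decreasing_1 0 e').
      rewrite cos_0 in H0. assert (cos e' < 1) by (apply H0; lra). lra. }
    exists (Rmax 0 (- ln (d/2) / m)). intros t Ht.
    assert (Ht0 : 0 <= t) by (pose proof (Rmax_l 0 (- ln (d/2) / m)); lra).
    assert (HM : - ln (d/2) / m < t) by (pose proof (Rmax_r 0 (- ln (d/2) / m)); lra).
    assert (Hexp : exp (- m * t) < d/2).
    { rewrite <- (exp_ln (d/2)) by lra. apply exp_increasing.
      apply (Rmult_lt_compat_l m) in HM; auto.
      replace (m * (- ln (d / 2) / m)) with (- ln (d/2)) in HM by (field; lra). lra. }
    assert (Hsd : cos e' < s t).
    { pose proof (Hdec t Ht0). pose proof (exp_pos (- m * t)).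
      pose proof (Hrange 0 (Rle_refl 0)).
      assert ((1 - s 0) * exp (- m * t) <= 2 * exp (- m * t)) by (apply Rmult_le_compat_r; lra).
      unfold d in Hexp. lra. }
    assert (Hac : acos (s t) < e').
    { pose proof (Hrange t Ht0). pose proof (acos_bound (s t)).
      destruct (Rlt_le_dec (acos (s t)) e') as [?|Hge]; auto.
      exfalso. pose proof PI_RGT_0.
      pose proof (cos_decr_1 e' (acos (s t)) ltac:(lra) ltac:(lra) ltac:(lra) ltac:(lra) Hge).
      rewrite cos_acos in H2 by lra. lra. }
    rewrite Rminus_0_r.
    destruct (N_cases qstar (q t)) as [[Hp E]|E].
    + rewrite E. pose proof (acos_bound (qs (qmul (q t) (qconj qstar)))).
      rewrite Rabs_right by lra. change (acos (s t) < eps). lra.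
    + rewrite E, Rabs_R0. apply cond_pos.
Qed.
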